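(* For all $i_1,\dots,i_n\in\mathbb{N}_0$, $$\sum_{j=1}^{n-1}\frac{1}{2^j}\,\mathtt{m}\big(x_j^{2^{j+1}i_j}\big)+\frac{1}{2^{n-1}}\,\mathtt{m}\big(x_n^{2^ni_n}\big)-\mathtt{m}_{i_1,\dots,i_n}^2\in\operatorname{qm}(\emptyset,\emptyset).$$
   Context: Let $\mathbb{R}[\underline x]=\mathbb{R}[x_1,\dots,x_n]$, $\mathscr{M}=\mathbb{R}[\mathtt{m}_{i_1,\dots,i_n}\colon (i_1,\dots,i_n)\in\mathbb{N}_0^n]$ the polynomial ring in countably many indeterminates with $\mathtt{m}_{0,\dots,0}:=1$, $\mathscr{M}[\underline x]=\mathscr{M}\otimes_{\mathbb{R}}\mathbb{R}[\underline x]$, and $\mathtt{m}:\mathscr{M}[\underline x]\to\mathscr{M}$ the unique $\mathscr{M}$-linear map with $\mathtt{m}(x_1^{i_1}\cdots x_n^{i_n})=\mathtt{m}_{i_1,\dots,i_n}$. $\operatorname{qm}(\emptyset,\emptyset)$ is the quadratic module of $\mathscr{M}$ generated by $\{\mathtt{m}(f^2)\colon f\in\mathscr{M}[\underline x]\}$ (smallest subset of $\mathscr{M}$ containing $1$ and these elements, closed under addition and under multiplication by squares of elements of $\mathscr{M}$). *)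

(* Defs.v *)
From HB Require Import structures.
From mathcomp Require Import all_boot all_order all_algebra.
From mathcomp Require Import finmap monalg.
Set Implicit Arguments. Unset Strict Implicit. Unset Printing Implicit Defensive.
Import Order.TTheory GRing.Theory Num.Theory.
Local Open Scope ring_scope.

Definition nzidx (n : nat) := {a : n.-tuple nat | a != nseq_tuple n 0%N}.

(* The ring \mathscr M = R[m_a : a in N_0^n], with m_0 := 1: the polynomial
   ring in the indeterminates m_a for nonzero a. *)
Definition Mring (R : realFieldType) (n : nat) := {malg R[cmonom (nzidx n)]}.

Definition mvar (R : realFieldType) (n : nat) (a : n.-tuple nat) : Mring R n :=
  if insub a is Some b then << ucm (b : nzidx n) >> else 1.

Definition Mx (R : realFieldType) (n : nat) := {malg (Mring R n)[cmonom 'I_n]}.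

Definition xvar (R : realFieldType) (n : nat) (j : 'I_n) : Mx R n := << ucm j >>.

(* The M-linear map m : M[x] -> M with m(x^a) = m_a. *)
Definition mm (R : realFieldType) (n : nat) (f : Mx R n) : Mring R n :=
  \sum_(k <- msupp f) f@_k * mvar R [tuple (k : cmonom 'I_n) j | j < n].

Inductive qm (R : realFieldType) (n : nat) : Mring R n -> Prop :=
| qm_one : qm 1
| qm_gen (f : Mx R n) : qm (mm (f ^+ 2))
| qm_add (a b : Mring R n) : qm a -> qm b -> qm (a + b)
| qm_mulsq (c a : Mring R n) : qm a -> qm (c ^+ 2 * a).

(* Main.v *)
Require Import Defs.
From HB Require Import structures.
From mathcomp Require Import all_boot all_order all_algebra.
From mathcomp Require Import finmap monalg.
From mathcomp Require Import ring zify.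
Set Implicit Arguments. Unset Strict Implicit.
Import Order.TTheory GRing.Theory Num.Theory.
Local Open Scope ring_scope.

Section S.
Variables (R : realFieldType) (N : nat).

Definition mon (E : 'I_N -> nat) : cmonom 'I_N :=
  [cmonom E j | j in [fset j | j : 'I_N]]%M.
Lemma monE (E : 'I_N -> nat) j : mon E j = E j :> nat.
Proof. by rewrite /mon cmE /= fsfunE in_fsetE. Qed.

Lemma mon_ext E F : E =1 F -> mon E = mon F.
Proof. by move=> h; apply/eqP/cmP=> j; rewrite !monE h. Qed.

Lemma mon_mul E F : mmul (mon E) (mon F) = mon (fun j => E j + F j)%N.
Proof. by apply/eqP/cmP=> j; rewrite cmM !monE. Qed.

Lemma mon1 : (mone : cmonom 'I_N) = mon (fun _ => 0%N).
Proof. by apply/eqP/cmP=> j; rewrite cm1 monE. Qed.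

Lemma ucm_mon j : ucm j = mon (fun l => nat_of_bool (j == l)).
Proof. by apply/eqP/cmP=> l; rewrite monE ucmE. Qed.

Fact MV_key : unit. Proof. by []. Qed.
Definition MV_def (E : 'I_N -> nat) : Mring R N := mvar R [tuple E j | j < N].
Definition MV := locked_with MV_key MV_def.
Lemma MVE E : MV E = mvar R [tuple E j | j < N].
Proof. by rewrite /MV unlock. Qed.

Lemma MV_ext E F : E =1 F -> MV E = MV F.
Proof. by move=> h; rewrite !MVE (eq_mktuple _ h). Qed.

Lemma MV0 : MV (fun _ => 0%N) = 1.
Proof.
rewrite MVE /mvar insubF //; apply/negbTE; rewrite negbK; apply/eqP.
by apply: eq_from_tnth => j; rewrite tnth_mktuple tnth_nseq.
Qed.

Lemma mmE (f : Mx R N) : @mm R N f = mmap idfun (fun k : cmonom 'I_N => mvar R [tuple k j | j < N]) f.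
Proof. by []. Qed.

Lemma mmD (f g : Mx R N) : mm (f + g) = mm f + mm g.
Proof. by rewrite !mmE raddfD. Qed.

Lemma mmU c E : @mm R N << c *g mon E >> = c * MV E.
Proof.
rewrite mmE mmapU /= MVE; congr (_ * _); congr (mvar R _); apply: eq_mktuple => j; exact: monE.
Qed.

Lemma qm0 : qm (0 : Mring R N).
Proof. by have := qm_mulsq 0 (qm_one R N); rewrite expr0n mul0r. Qed.


Lemma malg1E : (1 : Mx R N) = << mone >>.
Proof. by []. Qed.

Fact U_key : unit. Proof. by []. Qed.
Definition U_def (c : Mring R N) E : Mx R N := << c *g mon E >>.
Definition U := locked_with U_key U_def.
Lemma UE c E : U c E = << c *g mon E >>.
Proof. by rewrite /U unlock. Qed.

Lemma U_ext c E F : E =1 F -> U c E = U c F.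
Proof. by move=> h; rewrite !UE (mon_ext h). Qed.

Lemma mmU' c E : @mm R N (U c E) = c * MV E.
Proof. rewrite UE; exact: mmU. Qed.

Lemma UU (c d : Mring R N) E F :
  U c E * U d F = U (c * d) (fun j => E j + F j)%N.
Proof. by rewrite !UE malgM_def fgmulUU mon_mul. Qed.

Lemma expand (A B : Mx R N) : (A + B) * (A + B) = A * A + (A * B + B * A) + B * B.
Proof. rewrite mulrDl !mulrDr. by rewrite !addrA. Qed.

Lemma expandU (c d : Mring R N) E F : (U c E + U d F) * (U c E + U d F) = U (c*c) (fun j => E j + E j)%N + (U (c*d) (fun j => E j + F j)%N + U (d*c) (fun j => F j + E j)%N) + U (d*d) (fun j => F j + F j)%N.
Proof.
rewrite mulrDl !mulrDr !UU.
by rewrite !addrA.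
Qed.
Lemma sqU (c d : Mring R N) E F :
  @mm R N ((U c E + U d F) ^+ 2) =
  c * c * MV (fun j => E j + E j)%N + (c * d) *+ 2 * MV (fun j => E j + F j)%N
  + d * d * MV (fun j => F j + F j)%N.
Proof.
rewrite expr2 expandU !mmD !mmU'.
rewrite (MV_ext (E := fun j => (F j + E j)%N) (F := fun j => (E j + F j)%N)); last by move=> j; rewrite addnC.
rewrite [d * c]mulrC.
ring.
Qed.

Lemma sq E : qm (MV (fun j => E j + E j)%N - MV E ^+ 2).
Proof.
have := qm_gen (U 1 E + U (- MV E) (fun _ => 0%N)).
rewrite sqU.
rewrite (MV_ext (E := fun j => (E j + 0)%N) (F := E)); last by move=> j; rewrite addn0.
rewrite (MV_ext (E := fun j => (0 + 0)%N) (F := fun _ => 0%N)) // MV0.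
by congr qm; ring.
Qed.

Lemma amgm E F : qm (MV (fun j => E j + E j)%N + MV (fun j => F j + F j)%N
                     - MV (fun j => E j + F j)%N *+ 2).
Proof.
have := qm_gen (U 1 E + U (- 1) F).
by rewrite sqU; congr qm; ring.
Qed.

Lemma qm_half (a : Mring R N) : qm a -> qm ((2%:R^-1 : R) *: a).
Proof.
move=> h.
have e : (2%:R^-1 : R) = (2%:R^-1 : R) ^+ 2 + (2%:R^-1 : R) ^+ 2.
  by field.
rewrite [X in qm (X *: _)]e.
rewrite scalerDl -mul_malgC.
rewrite rmorphXn.
exact: (qm_add (qm_mulsq _ h) (qm_mulsq _ h)).
Qed.

Lemma qm_pow (a : Mring R N) k : qm a -> qm (((2 ^ k)%:R^-1 : R) *: a).
Proof.
move=> h; elim: k => [|k IH]; first by rewrite expn0 invr1 scale1r.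
have -> : ((2 ^ k.+1)%:R^-1 : R) = 2%:R^-1 * (2 ^ k)%:R^-1.
  by rewrite expnS natrM invfM.
by rewrite -scalerA; apply: qm_half.
Qed.

Lemma xpow j e : xvar R j ^+ e = U 1 (fun l => e * (j == l))%N.
Proof.
elim: e => [|e IH].
  rewrite expr0 malg1E UE mon1; congr (<< 1 *g _ >>); apply: mon_ext => l; by rewrite mul0n.
rewrite exprS IH /xvar ucm_mon -[X in X * _]UE UU mul1r; apply: U_ext => l.
by rewrite mulSn.
Qed.

Lemma step_eq (x y w s l : Mring R N) (c : R) :
  c *: x + s + l - (c *+ 2) *: w = (s + l - c *: y) + c *: (x + y - w *+ 2).
Proof.
rewrite !scalerDr ?scalerN -scalerMnl -scalerMnr.
move: (c *: x) (c *: y) (c *: w) => X Y W.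
ring.
Qed.

End S.

Unset Implicit Arguments. Set Strict Implicit.

(* Number of variables is n.+1 (>= 1); 1-based x_j is xvar at 0-based j-1. *)
Theorem lemma6p4 (R : realFieldType) (n : nat) (i : n.+1.-tuple nat) :
  qm (\sum_(j < n)
        ((2 ^ j.+1)%:R^-1 : R) *:
          mm (xvar R (widen_ord (leqnSn n) j) ^+ (2 ^ j.+2 * tnth i (widen_ord (leqnSn n) j)))
      + ((2 ^ n)%:R^-1 : R) *: mm (xvar R ord_max ^+ (2 ^ n.+1 * tnth i ord_max))
      - mvar R i ^+ 2).
Proof.
under eq_bigr do rewrite xpow mmU' mul1r.
rewrite xpow mmU' mul1r.
pose G (k : nat) (l : 'I_n.+1) : nat := if (k <= l)%N then (2 ^ k.+1 * tnth i l)%N else 0%N.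
pose Fj (j : 'I_n) : Mring R n.+1 := ((2 ^ j.+1)%:R^-1 : R) *: MV R (fun l => 2 ^ j.+2 * tnth i (widen_ord (leqnSn n) j) * (widen_ord (leqnSn n) j == l))%N.
pose L : Mring R n.+1 := ((2 ^ n)%:R^-1 : R) *: MV R (fun l => 2 ^ n.+1 * tnth i ord_max * (ord_max == l))%N.
have claim : forall d, (d <= n)%N -> qm (\sum_(j < n | (n - d <= j)%N) Fj j + L - ((2 ^ (n - d)%N)%:R^-1 : R) *: MV R (G (n - d)%N)).
  elim=> [_|d IH ledn].
    rewrite subn0 big_pred0; last by move=> j; rewrite leqNgt ltn_ord.
    rewrite add0r /L.
    rewrite (@MV_ext R n.+1 (G n) (fun l => 2 ^ n.+1 * tnth i ord_max * (ord_max == l))%N); first by rewrite subrr; apply: qm0.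
    move=> l; rewrite /G; case: (eqVneq ord_max l) => [<-|ne].
      by rewrite leqnn muln1.
    rewrite muln0; have : (l < n)%N.
      have := ltn_ord l; rewrite ltnS leq_eqVlt => /orP [/eqP hl|//].
      by move: ne; rewrite -(inj_eq val_inj) /= hl eqxx.
    by rewrite ltnNge => /negbTE ->.
  have IH' := IH (ltnW ledn).
  set k := (n - d.+1)%N.
  have hk : (k < n)%N by rewrite /k; lia.
  have hkd : (n - d)%N = k.+1 by rewrite /k; lia.
  rewrite hkd in IH'.
  rewrite (bigD1 (Ordinal hk)) /=; last by rewrite leqnn.
  rewrite (eq_bigl (fun j : 'I_n => (k.+1 <= j)%N)); last first.
    move=> j /=; rewrite ltn_neqAle andbC; congr (_ && _).
    by rewrite eq_sym.
  have hc : ((2 ^ k)%:R^-1 : R) = ((2 ^ k.+1)%:R^-1 : R) *+ 2.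
    have hx : ((2 ^ k)%:R : R) != 0 by rewrite pnatr_eq0 expn_eq0.
    rewrite (expnS 2 k) natrM.
    move: hx; set x := ((2 ^ k)%:R : R) => hx.
    by field.
  rewrite hc /Fj.
  rewrite (step_eq _ (MV R (G k.+1))).
  apply: (qm_add IH').
  apply: qm_pow.
  set w := widen_ord (leqnSn n) (Ordinal hk).
  pose E (l : 'I_n.+1) := (2 ^ k.+1 * tnth i w * (w == l))%N.
  pose F (l : 'I_n.+1) := if (k.+1 <= l)%N then (2 ^ k.+1 * tnth i l)%N else 0%N.
  have H := amgm R E F.
  rewrite (@MV_ext R n.+1 (fun j => E j + E j)%N (fun l => 2 ^ k.+2 * tnth i w * (w == l))%N) in H; last first.
    by move=> l; rewrite /E addnn -mul2n !mulnA -expnS.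
  rewrite (@MV_ext R n.+1 (fun j => F j + F j)%N (G k.+1)) in H; last first.
    move=> l; rewrite /F /G; case: ifP => _ //.
    by rewrite addnn -mul2n mulnA -expnS.
  rewrite (@MV_ext R n.+1 (fun j => E j + F j)%N (G k)) in H; last first.
    move=> l; rewrite /E /F /G; case: (eqVneq w l) => [<-|ne].
      by rewrite /= ltnn leqnn muln1 addn0.
    rewrite muln0 add0n.
    have : k != l by move: ne; rewrite -(inj_eq val_inj).
    by rewrite ltn_neqAle => /negbTE ->.
  exact: H.
have C := claim n (leqnn n).
rewrite subnn expn0 invr1 scale1r in C.
rewrite (eq_bigl (fun _ => true)) in C; last by [].
rewrite (@MV_ext R n.+1 (G 0%N) (fun l => tnth i l + tnth i l)%N) in C; last first.
  by move=> l; rewrite /G leq0n expn1 mul2n addnn.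
have hi : mvar R i = MV R (tnth i).
  rewrite MVE; congr (mvar R _); apply: eq_from_tnth => j.
  by rewrite tnth_mktuple.
rewrite hi.
have := qm_add C (sq R (tnth i)).
by rewrite addrA subrK.
Qed.
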